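(* Let $J_{mult}\subset dWHA$ be the subgroup spanned by all substitutions $\binom{\rho}{\sigma}$ such that some letter occurs at least twice in $\rho$ or at least twice in $\sigma$. Then $J_{mult}$ is a Hopf ideal of $(dWHA,m,\mu)$: $m(J_{mult}\otimes dWHA)+m(dWHA\otimes J_{mult})\subset J_{mult}$, $\mu(J_{mult})\subset J_{mult}\otimes dWHA+dWHA\otimes J_{mult}$, and $\varepsilon(J_{mult})=0$. Consequently the $\mathbf Z$-linear map $\psi:dWHA\to\varphi(MPR)$ that is the identity on substitutions with no repeated letter in either word and zero on substitutions in $J_{mult}$ is a Hopf algebra morphism and a Hopf algebra retraction of the inclusion $\varphi(MPR)\subset dWHA$.
   Context: Words are finite sequences of letters; $*$ denotes concatenation; the support $\mathrm{supp}(\alpha)$ of a word is the set of letters occurring in it. The shuffle product $\alpha\times_{sh}\beta$ of words $\alpha=[c_1,\dots,c_p]$, $\beta=[d_1,\dots,d_q]$ is the sum, with multiplicities, over all ways of choosing $p$ of the $p+q$ positions, of the word obtained by placing the $c$'s in their original order in the chosen positions and the $d$'s in their original order in the remaining ones. A subword of $[a_1,\dots,a_m]$ is a word $[a_{i_1},\dots,a_{i_r}]$ with $i_1<\dots<i_r$. Definition of $dWHA$: Let $\mathcal X$ be a countably infinite alphabet. A substitution is a pair $p=\binom{\rho}{\sigma}$ of words over $\mathcal X$ with $\mathrm{supp}(\rho)=\mathrm{supp}(\sigma)$, considered up to simultaneously renaming the letters of both words by a bijection of $\mathcal X$. $dWHA$ is the free abelian group with basis all substitutions (including the empty substitution $\binom{[\,]}{[\,]}$),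 graded by $\deg(p)=\#\mathrm{supp}(\rho)$. Multiplication: for substitutions $p=\binom{\rho}{\sigma}$, $p'=\binom{\rho'}{\sigma'}$ written with $\mathrm{supp}(\rho)\cap\mathrm{supp}(\rho')=\emptyset$, $m(p\otimes p')=\binom{\rho*\rho'}{\sigma\times_{sh}\sigma'}$, meaning the sum of $\binom{\rho*\rho'}{\gamma}$ over the terms $\gamma$ (with multiplicity) of $\sigma\times_{sh}\sigma'$. The unit is the empty substitution. A good cut of a word $\sigma$ is a factorization $\sigma=\sigma_1*\sigma_2$ with $\mathrm{supp}(\sigma_1)\cap\mathrm{supp}(\sigma_2)=\emptyset$ (the two trivial cuts included). Comultiplication: $\mu(p)=\sum \binom{p^{-1}(\sigma_1)}{\sigma_1}\otimes\binom{p^{-1}(\sigma_2)}{\sigma_2}$, summed over all good cuts $\sigma=\sigma_1*\sigma_2$, where $p^{-1}(\sigma_i)$ is the subword of $\rho$ consisting of all occurrences in $\rho$ of letters of $\mathrm{supp}(\sigma_i)$. Counit: $\varepsilon$ is $1$ on the empty substitution and $0$ on all other substitutions. This is a Hopf algebra. $\varphi(MPR)$ denotes the sub Hopf algebra of $dWHA$ spanned by the substitutions in which neither the top nor the bottom word has a repeated letter (it is the image of the Hopf algebra of permutations $MPR$ under $[t_1,\dots,t_n]\mapsto\binom{[x_1,\dots,x_n]}{[x_{t_1},\dots,x_{t_n}]}$). *)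

(* Defs.v *)
From HB Require Import structures.
From mathcomp Require Import all_boot all_order all_algebra.
From mathcomp Require Import finmap.
From mathcomp Require Import monalg.

Set Implicit Arguments.
Unset Strict Implicit.
Unset Printing Implicit Defensive.

Import GRing.Theory.
Local Open Scope ring_scope.

(* Letters: the countably infinite alphabet X is nat.  Words: seq nat. *)
(* A substitution (rho ; sigma) with supp rho = supp sigma, up to a     *)
(* simultaneous bijective renaming of letters, is represented by its    *)
(* unique canonical representative: letters renamed 0,1,2,... in the    *)
(* order of their first occurrence in rho.                              *)

Definition same_supp (r s : seq nat) : bool := all (mem r) s && all (mem s) r.

Definition canonical_pair (rs : seq nat * seq nat) : bool :=
  (undup rs.1 == iota 0 (size (undup rs.1))) && same_supp rs.1 rs.2.

Record subst := Subst { subst_val : seq nat * seq nat;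
                        subst_canon : canonical_pair subst_val }.

HB.instance Definition _ := [isSub for subst_val].
HB.instance Definition _ := [Equality of subst by <:].
HB.instance Definition _ := [Choice of subst by <:].
HB.instance Definition _ := [Countable of subst by <:].

Definition top (p : subst) : seq nat := (subst_val p).1.
Definition bot (p : subst) : seq nat := (subst_val p).2.

Definition empty_subst : subst := @Subst ([::], [::]) erefl.

Definition sdeg (p : subst) : nat := size (undup (top p)).

(* canonical renaming of a pair of words (by first occurrence in the
   top word); packed into a substitution.  Used only on pairs with equal
   supports, where it yields the class of (r ; s). *)
Definition normalize (r s : seq nat) : seq nat * seq nat :=
  let f x := index x (undup r) in (map f r, map f s).

Definition mkSubst (r s : seq nat) : subst :=
  insubd empty_subst (normalize r s).

(* dWHA = free abelian group on substitutions; dWHA (x) dWHA = free     *)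
(* abelian group on pairs of substitutions.                             *)
Definition dWHA := malg subst int.
Definition dWHA2 := malg (subst * subst)%type int.

(* shuffle product of words, with multiplicities: for each choice of the
   positions (a bit mask of length p+q with p ones) of the letters of a *)
Fixpoint bitseqs (n : nat) : seq bitseq :=
  if n is n'.+1 then map (cons true) (bitseqs n') ++ map (cons false) (bitseqs n')
  else [:: [::]].

Fixpoint interleave (m : bitseq) (a b : seq nat) : seq nat :=
  match m with
  | [::] => [::]
  | true :: m' => head 0%N a :: interleave m' (behead a) b
  | false :: m' => head 0%N b :: interleave m' a (behead b)
  end.

Definition shuffle (a b : seq nat) : seq (seq nat) :=
  [seq interleave m a b | m <- bitseqs (size a + size b)
                        & count id m == size a].

(* product of two basis elements: rename the letters of q disjointly
   (shift by deg p), then  (rho*rho' ; sigma x_sh sigma') *)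
Definition mul_basis (p q : subst) : dWHA :=
  let k := sdeg p in
  let r := top p ++ map (addn k) (top q) in
  \sum_(g <- shuffle (bot p) (map (addn k) (bot q))) << mkSubst r g >>.

Definition mT (t : dWHA2) : dWHA :=
  \sum_(pq <- msupp t) mul_basis pq.1 pq.2 *~ t@_pq.

Definition unitW : dWHA := << empty_subst >>.

Definition comul_basis (p : subst) : dWHA2 :=
  let r := top p in let s := bot p in
  \sum_(i < (size s).+1 | ~~ has (mem (take i s)) (drop i s))
     << (mkSubst [seq x <- r | x \in take i s] (take i s),
         mkSubst [seq x <- r | x \in drop i s] (drop i s)) >>.

Definition comul (f : dWHA) : dWHA2 :=
  \sum_(p <- msupp f) comul_basis p *~ f@_p.

Definition counit (f : dWHA) : int := f@_empty_subst.

Definition tens (f g : dWHA) : dWHA2 :=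
  \sum_(p <- msupp f) \sum_(q <- msupp g) << (f@_p * g@_q) *g (p, q) >>.

Definition map2 (F : dWHA -> dWHA) (t : dWHA2) : dWHA2 :=
  \sum_(pq <- msupp t) tens (F << pq.1 >>) (F << pq.2 >>) *~ t@_pq.

Definition noRep (p : subst) : bool := uniq (top p) && uniq (bot p).
Definition hasRep (p : subst) : bool := ~~ noRep p.

Definition Jmult (f : dWHA) : Prop := forall p, f@_p != 0 -> hasRep p.

Definition inMPR (f : dWHA) : Prop := forall p, f@_p != 0 -> noRep p.

Definition J_A (t : dWHA2) : Prop := forall pq, t@_pq != 0 -> hasRep pq.1.
Definition A_J (t : dWHA2) : Prop := forall pq, t@_pq != 0 -> hasRep pq.2.
Definition JA_plus_AJ (t : dWHA2) : Prop :=
  forall pq, t@_pq != 0 -> hasRep pq.1 || hasRep pq.2.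

Definition psi (f : dWHA) : dWHA :=
  \sum_(p <- msupp f) (if noRep p then << p >> else 0) *~ f@_p.

(* Main.v *)
Require Import Defs.
From mathcomp Require Import all_boot all_order all_algebra.
From mathcomp Require Import finmap monalg.
From mathcomp Require Import zify.

Lemma undup_map_in {T U : eqType} {f : T -> U} {s : seq T} :
  {in s &, injective f} -> undup (map f s) = map f (undup s).
Proof.
elim: s => //= x s IH inj.
have inj' : {in s &, injective f}.
  by move=> a b ha hb; apply: inj; rewrite inE ?ha ?hb orbT.
have -> : (f x \in map f s) = (x \in s).
  apply/mapP/idP => [[y ys e]|xs]; last by exists x.
  by rewrite (inj x y) ?inE ?eqxx ?ys ?orbT.
by case: (x \in s); rewrite /= IH.
Qed.

Lemma map_index_uniq (T : eqType) (u : seq T) :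
  uniq u -> map (index^~ u) u = iota 0 (size u).
Proof.
move=> uu; apply: (@eq_from_nth _ 0%N); first by rewrite size_map size_iota.
move=> i; rewrite size_map => lt.
case: u uu lt => [//|x0 u'] uu lt.
by rewrite (nth_map x0) // nth_iota // index_uniq.
Qed.

Lemma same_suppP r s : same_supp r s -> r =i s.
Proof.
case/andP=> /allP h1 /allP h2 x; apply/idP/idP => [/h2|/h1] //.
Qed.

Arguments same_suppP {r s}.

Section Norm.
Variables r s : seq nat.
Hypothesis ss : same_supp r s.
Let f := fun x => index x (undup r).

Lemma f_inj : {in r &, injective f}.
Proof.
move=> x y xr yr; rewrite /f => e; apply: (@index_inj _ 0%N (undup r)) => //; by rewrite mem_undup.
Qed.

Lemma f_inj_s : {in s &, injective f}.
Proof.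
move=> x y xs ys; apply: f_inj; by rewrite (same_suppP ss).
Qed.

Lemma normalize_canon : canonical_pair (normalize r s).
Proof.
rewrite /canonical_pair /normalize /=; apply/andP; split.
  by rewrite (undup_map_in f_inj) map_index_uniq ?undup_uniq // size_iota.
apply/andP; split; rewrite all_map; apply/allP => x xin /=; apply: map_f;
  by rewrite ?(same_suppP ss) // -(same_suppP ss).
Qed.

Lemma mkSubst_val : subst_val (mkSubst r s) = normalize r s.
Proof. exact: (insubdK empty_subst normalize_canon). Qed.

Lemma noRep_mkSubst : noRep (mkSubst r s) = uniq r && uniq s.
Proof.
rewrite /noRep /top /bot mkSubst_val /normalize /=.
by rewrite (map_inj_in_uniq f_inj) (map_inj_in_uniq f_inj_s).
Qed.
End Norm.

Lemma canon_supp p : same_supp (top p) (bot p).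
Proof. by case: p => [[r s] c]; rewrite /top /bot /=; case/andP: c. Qed.

Lemma canon_lt p x : x \in top p -> x < sdeg p.
Proof.
case: p => [[r s] c]; rewrite /sdeg /top /= => xr; case/andP: c => /eqP /= e _.
move: (xr); rewrite -mem_undup e mem_iota add0n.
by rewrite size_iota.
Qed.

Lemma noRep_empty : noRep empty_subst.
Proof. by []. Qed.

Lemma bitseqs_size n m : m \in bitseqs n -> size m = n.
Proof.
elim: n m => [|n IH] m /=; first by rewrite inE => /eqP ->.
by rewrite mem_cat => /orP[] /mapP [m' /IH <- ->].
Qed.

Lemma interleave_perm m a b : size m = size a + size b -> count id m = size a ->
  perm_eq (interleave m a b) (a ++ b).
Proof.
elim: m a b => [|c m IH] a b /=.
  by case: a => //; case: b.
case: c => /= sz cnt.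
  case: a sz cnt => [|x a] //= sz cnt.
  by rewrite perm_cons IH //; lia.
have hm := count_size id m.
case: b sz => [|y b] /= sz; first by lia.
have h : perm_eq (a ++ y :: b) (y :: (a ++ b)) by rewrite -cat1s perm_catCA.
rewrite perm_sym (permPl h) perm_cons perm_sym IH //; lia.
Qed.

Lemma shuffle_perm a b g : g \in shuffle a b -> perm_eq g (a ++ b).
Proof.
case/mapP => m; rewrite mem_filter => /andP[/eqP c /bitseqs_size sz] ->.
exact: interleave_perm.
Qed.

Lemma has_shift (a b : seq nat) k : (forall x, x \in a -> x < k) ->
  has (mem a) (map (addn k) b) = false.
Proof.
move=> h; apply/hasPn => y /mapP [x _ ->] /=; apply/negP => /h; lia.
Qed.

Section Prod.
Variables p q : subst.
Let k := sdeg p.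
Let r := top p ++ map (addn k) (top q).
Variable g : seq nat.
Hypothesis pg : perm_eq g (bot p ++ map (addn k) (bot q)).

Lemma prod_supp : same_supp r g.
Proof.
have e : r =i g.
  move=> x; rewrite (perm_mem pg) !mem_cat; congr orb.
    by rewrite (same_suppP (canon_supp p)).
  apply/mapP/mapP => [][y yin ->]; exists y => //;
  by move: yin; rewrite (same_suppP (canon_supp q)).
by apply/andP; split; apply/allP => x /=; rewrite e.
Qed.

Lemma prod_noRep : uniq r && uniq g = noRep p && noRep q.
Proof.
rewrite (perm_uniq pg) /r !cat_uniq !has_shift.
- rewrite !(map_inj_uniq (@addnI k)) /noRep /=; case: (uniq (top p)); case: (uniq (bot p)) => //=.
  by rewrite andbC.
- by move=> x; rewrite -(same_suppP (canon_supp p)); apply: canon_lt.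
- by move=> x; apply: canon_lt.
Qed.
End Prod.

Section Cut.
Variable p : subst.
Variable i : nat.
Let r := top p.
Let s := bot p.
Hypothesis good : ~~ has (mem (take i s)) (drop i s).

Lemma cut_supp1 : same_supp [seq x <- r | x \in take i s] (take i s).
Proof.
apply/andP; split; apply/allP => x /=; rewrite mem_filter; last by case/andP.
move=> xt; rewrite xt /= /r (same_suppP (canon_supp p)) -(cat_take_drop i (bot p)).
by rewrite mem_cat xt.
Qed.

Lemma cut_supp2 : same_supp [seq x <- r | x \in drop i s] (drop i s).
Proof.
apply/andP; split; apply/allP => x /=; rewrite mem_filter; last by case/andP.
move=> xt; rewrite xt /= /r (same_suppP (canon_supp p)) -(cat_take_drop i (bot p)).
by rewrite mem_cat xt orbT.
Qed.

Lemma cut_noRep :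
  (uniq [seq x <- r | x \in take i s] && uniq (take i s)) &&
  (uniq [seq x <- r | x \in drop i s] && uniq (drop i s)) = noRep p.
Proof.
apply/idP/idP; last first.
  by case/andP=> ur us; rewrite !filter_uniq // take_uniq // drop_uniq.
case/andP=> /andP[u1 u2] /andP[u3 u4].
rewrite /noRep -/r -/s.
have -> : uniq s by rewrite -(cat_take_drop i s) cat_uniq u2 u4 good.
rewrite andbT.
set P := mem (take i s).
have e : [seq x <- r | x \in drop i s] = [seq x <- r | predC P x].
  apply: eq_in_filter => x xr /=.
  have : x \in s by rewrite -(same_suppP (canon_supp p)).
  rewrite -{1}(cat_take_drop i s) mem_cat /P /=.
  case: (boolP (x \in take i s)) => xt /=; last by move=> ->.
  move=> _; apply/negbTE/negP => xd; move/hasPn: good => /(_ x xd); by rewrite /= xt.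
rewrite e in u3.
have := perm_filterC P r; move/permPl => pp.
rewrite -(perm_uniq pp) cat_uniq u1 u3 andbT /=.
apply/hasPn => x; rewrite mem_filter => /andP[/= nx _].
by rewrite mem_filter negb_and nx.
Qed.
End Cut.

Import GRing.Theory.
Local Open Scope ring_scope.
Local Open Scope fset_scope.

Section Gen.
Context {K : choiceType}.

Definition supp_in (P : pred K) (f : {malg int[K]}) := forall k, ~~ P k -> f@_k = 0.

Lemma supp_inP (P : pred K) f : supp_in P f <-> (forall k, f@_k != 0 -> P k).
Proof.
split=> H k.
  by apply: contraR => /H ->.
by move=> nP; apply/eqP; apply: contraR nP => /H.
Qed.

Lemma supp_in_sum (P : pred K) (I : Type) (r : seq I) (Q : pred I) F :
  (forall i, Q i -> supp_in P (F i)) -> supp_in P (\sum_(i <- r | Q i) F i).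
Proof.
move=> H k nP; rewrite raddf_sum /=; apply: big1 => i /H; exact.
Qed.

Lemma supp_in_Mz (P : pred K) f n : supp_in P f -> supp_in P (f *~ n).
Proof. by move=> H k nP; rewrite raddfMz /= (H k nP) mul0rz. Qed.

Lemma supp_in_U (P : pred K) p : P p -> supp_in P << p >>.
Proof. by move=> Pp k nP; rewrite mcoeffU; case: eqP => [e|//]; rewrite -e Pp in nP. Qed.

Lemma supp_in0 (P : pred K) : supp_in P 0.
Proof. by move=> k _; rewrite mcoeff0. Qed.

Definition Lin {V : zmodType} (g : K -> V) (f : {malg int[K]}) : V :=
  \sum_(p <- msupp f) g p *~ f@_p.

Lemma LinE {V : zmodType} (g : K -> V) f (D : {fset K}) : msupp f `<=` D ->
  Lin g f = \sum_(p <- D) g p *~ f@_p.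
Proof.
move=> sub; rewrite /Lin; apply: big_fset_incl => // x _ xn.
by rewrite mcoeff_outdom // mulrz0.
Qed.

Lemma LinU {V : zmodType} (g : K -> V) p : Lin g << p >> = g p.
Proof. by rewrite /Lin msuppU oner_eq0 big_seq_fset1 mcoeffUU. Qed.

Lemma Lin0 {V : zmodType} (g : K -> V) : Lin g 0 = 0.
Proof. by rewrite /Lin msupp0 big_seq_fset0. Qed.

Lemma Lin_coef {K' : choiceType} (g : K -> {malg int[K']}) f k :
  (Lin g f)@_k = \sum_(p <- msupp f) (g p)@_k *~ f@_p.
Proof. by rewrite /Lin raddf_sum; apply: eq_bigr => p _; rewrite raddfMz. Qed.

Lemma restrE (P : pred K) f k :
  (Lin (fun p => if P p then << p >> else 0) f)@_k = if P k then f@_k else 0.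
Proof.
rewrite Lin_coef.
have [kin|kout] := boolP (k \in msupp f).
  rewrite (big_fsetD1 k) //= big1_fset.
    by rewrite addr0; case: (P k); rewrite ?mcoeffUU ?mcoeff0 ?mul1rz ?intz ?mul0rz.
  move=> p; rewrite in_fsetD1 => /andP[pk _] _.
  by case: (P p); rewrite ?mcoeffU ?mcoeff0 ?(negbTE pk) ?mul0rz.
rewrite big1_fset; first by case: (P k); rewrite // mcoeff_outdom.
move=> p pin _; case: (P p); rewrite ?mcoeffU ?mcoeff0 ?mul0rz //.
by case: eqP => [e|]; [rewrite -e pin in kout | rewrite mul0rz].
Qed.

End Gen.
Lemma mul_basis_supp p q :
  supp_in (fun x => noRep x == (noRep p && noRep q)) (mul_basis p q).
Proof.
rewrite /mul_basis big_seq; apply: supp_in_sum => g gin; apply: supp_in_U.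
have pg := shuffle_perm _ _ _ gin.
by rewrite (noRep_mkSubst _ _ (prod_supp _ _ _ pg)) (prod_noRep _ _ _ pg).
Qed.

Lemma comul_basis_supp p :
  supp_in (fun pq : subst * subst => (noRep pq.1 && noRep pq.2) == noRep p) (comul_basis p).
Proof.
rewrite /comul_basis; apply: supp_in_sum => i good; apply: supp_in_U => /=.
rewrite (noRep_mkSubst _ _ (cut_supp1 p i)) (noRep_mkSubst _ _ (cut_supp2 p i)).
by rewrite (cut_noRep _ _ good).
Qed.

Lemma Lin_coefD {K K' : choiceType} (g : K -> {malg int[K']}) f k (D : {fset K}) :
  msupp f `<=` D -> (Lin g f)@_k = \sum_(p <- D) (g p)@_k *~ f@_p.
Proof.
move=> sub; rewrite (LinE g f D sub) raddf_sum; apply: eq_bigr => p _; by rewrite raddfMz.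
Qed.

Lemma mTE x : mT x = Lin (fun pq : subst * subst => mul_basis pq.1 pq.2) x.
Proof. by []. Qed.
Lemma comulE x : comul x = Lin comul_basis x.
Proof. by []. Qed.

Lemma psi_coef f k : (psi f)@_k = if noRep k then f@_k else 0.
Proof. exact: restrE. Qed.

Lemma psiU p : psi << p >> = if noRep p then << p >> else 0.
Proof. exact: (LinU (fun p => if noRep p then << p >> else 0)). Qed.

Lemma tensUU p q : tens << p >> << q >> = << (p, q) >>.
Proof.
by rewrite /tens msuppU oner_eq0 big_seq_fset1 msuppU oner_eq0 big_seq_fset1 !mcoeffUU mulr1.
Qed.

Lemma tens0l g : tens 0 g = 0.
Proof. by rewrite /tens msupp0 big_seq_fset0. Qed.

Lemma tens0r g : tens g 0 = 0.
Proof. by rewrite /tens big1 // => p _; rewrite msupp0 big_seq_fset0. Qed.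

Lemma map2_psi t :
  map2 psi t = Lin (fun pq : subst * subst => if noRep pq.1 && noRep pq.2 then << pq >> else 0) t.
Proof.
rewrite /map2 /Lin; apply: eq_bigr => [[p q]] _ /=; rewrite !psiU.
by case: (noRep p); case: (noRep q); rewrite ?tensUU ?tens0l ?tens0r.
Qed.

Lemma map2_psi_coef t k : (map2 psi t)@_k = if noRep k.1 && noRep k.2 then t@_k else 0.
Proof. by rewrite map2_psi restrE. Qed.

Local Close Scope fset_scope.

Theorem mainTheorem8 :
  (* J_mult is a Hopf ideal *)
  ((forall t : dWHA2, J_A t -> Jmult (mT t)) /\
   (forall t : dWHA2, A_J t -> Jmult (mT t)) /\
   (forall f : dWHA, Jmult f -> JA_plus_AJ (comul f)) /\
   (forall f : dWHA, Jmult f -> counit f = 0)) /\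
  (* psi is a Hopf algebra (i.e. bialgebra) morphism *)
  ((forall t : dWHA2, psi (mT t) = mT (map2 psi t)) /\
   psi unitW = unitW /\
   (forall f : dWHA, comul (psi f) = map2 psi (comul f)) /\
   (forall f : dWHA, counit (psi f) = counit f)) /\
  (* psi is a retraction of the inclusion phi(MPR) <= dWHA *)
  ((forall f : dWHA, inMPR (psi f)) /\
   (forall f : dWHA, inMPR f -> psi f = f)).
Proof.
split; [split; [|split; [|split]] | split; [split; [|split; [|split]] | split]].
- move=> t H; rewrite /Jmult; apply/supp_inP.
  rewrite mTE /Lin big_seq; apply: supp_in_sum => pq pin; apply: supp_in_Mz.
  have hr := H pq ltac:(by rewrite mcoeff_neq0).
  move=> k nk; apply: (mul_basis_supp pq.1 pq.2 k).
  by move: nk hr; rewrite /hasRep => /negbNE -> /negbTE ->.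
- move=> t H; rewrite /Jmult; apply/supp_inP.
  rewrite mTE /Lin big_seq; apply: supp_in_sum => pq pin; apply: supp_in_Mz.
  have hr := H pq ltac:(by rewrite mcoeff_neq0).
  move=> k nk; apply: (mul_basis_supp pq.1 pq.2 k).
  by move: nk hr; rewrite /hasRep => /negbNE -> /negbTE ->; rewrite andbF.
- move=> f H; rewrite /JA_plus_AJ; apply/supp_inP.
  rewrite comulE /Lin big_seq; apply: supp_in_sum => p pin; apply: supp_in_Mz.
  have hr := H p ltac:(by rewrite mcoeff_neq0).
  move=> k nk; apply: (comul_basis_supp p k).
  move: nk hr; rewrite /hasRep negb_or !negbK => /andP[-> ->] /negbTE -> //.
- move=> f H; rewrite /counit; apply/eqP; apply: contraT => /H.
  by rewrite /hasRep noRep_empty.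
- move=> t; apply/malgP => k; rewrite psi_coef.
  rewrite mTE Lin_coef mTE (@Lin_coefD _ _ _ _ _ (msupp t)); last first.
    apply/fsubsetP => x; rewrite -!mcoeff_neq0 map2_psi_coef.
    by case: ifP => //; rewrite eqxx.
  case: (boolP (noRep k)) => nk.
    apply: eq_bigr => [[p q]] _ /=; rewrite map2_psi_coef /=.
    case: ifP => // hb; rewrite mulr0z (mul_basis_supp p q k) ?mul0rz //=.
    by rewrite nk hb.
  rewrite big1 // => [[p q]] _ /=; rewrite map2_psi_coef /=.
  case: ifP => hb; last by rewrite mulr0z.
  by rewrite (mul_basis_supp p q k) ?mul0rz //= (negbTE nk) hb.
- by rewrite /unitW psiU noRep_empty.
- move=> f; apply/malgP => k; rewrite map2_psi_coef comulE.
  rewrite (@Lin_coefD _ _ _ _ _ (msupp f)); last first.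
    apply/fsubsetP => x; rewrite -!mcoeff_neq0 psi_coef.
    by case: ifP => //; rewrite eqxx.
  rewrite Lin_coef.
  case: ifP => hb.
    apply: eq_bigr => p _; rewrite psi_coef; case: ifP => np //.
    by rewrite mulr0z (comul_basis_supp p k) ?mul0rz //= hb np.
  apply: big1 => p _; rewrite psi_coef; case: ifP => np; last by rewrite mulr0z.
  by rewrite (comul_basis_supp p k) ?mul0rz //= hb np.
- by move=> f; rewrite /counit psi_coef noRep_empty.
- move=> f k; rewrite psi_coef; case: ifP => // _; by rewrite eqxx.
- move=> f H; apply/malgP => k; rewrite psi_coef; case: ifP => // nk.
  by apply/esym/eqP; apply: contraT => /H; rewrite nk.
Qed.
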